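(* Let $a,b>0$, $0<\alpha<1$, $0<A<1$, $B>0$ and $\beta=A+iB$. Define for $\omega>0$ $$\hat E(\omega)=a(i\omega)^{\alpha}+b\big((i\omega)^{\beta}+(i\omega)^{\bar\beta}\big).$$ (i) If $\operatorname{Re}\hat E(\omega)\ge0$ and $\operatorname{Im}\hat E(\omega)\ge 0$ for all $\omega>0$, then $A=\alpha$. (ii) If $A=\alpha$, then $\operatorname{Re}\hat E(\omega)\ge0$ and $\operatorname{Im}\hat E(\omega)\ge 0$ for all $\omega>0$ if and only if $$a\ge 2b\cosh\frac{B\pi}{2}\sqrt{1+\Big(\cot\frac{\alpha\pi}{2}\tanh\frac{B\pi}{2}\Big)^2}\quad\text{when }\alpha\in(0,\tfrac12],$$ $$a\ge 2b\cosh\frac{B\pi}{2}\sqrt{1+\Big(\tan\frac{\alpha\pi}{2}\tanh\frac{B\pi}{2}\Big)^2}\quad\text{when }\alpha\in[\tfrac12,1).$$ In particular these conditions imply $a\ge 2b$.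
   Context: For $\omega>0$ and $\gamma\in\mathbb C$, $(i\omega)^\gamma=\omega^\gamma e^{i\gamma\pi/2}$ with $\omega^\gamma=e^{\gamma\ln\omega}$ (principal branch). *)

(* Defs.v *)
From Stdlib Require Import Reals.
Open Scope R_scope.

Definition Cplx : Type := (R * R)%type.
Definition Re (z : Cplx) : R := fst z.
Definition Im (z : Cplx) : R := snd z.
Definition Cadd (z w : Cplx) : Cplx := (Re z + Re w, Im z + Im w).
Definition Cmul (z w : Cplx) : Cplx :=
  (Re z * Re w - Im z * Im w, Re z * Im w + Im z * Re w).
Definition Cscal (r : R) (z : Cplx) : Cplx := (r * Re z, r * Im z).
Definition Cconj (z : Cplx) : Cplx := (Re z, - Im z).
Definition Cexp (z : Cplx) : Cplx := (exp (Re z) * cos (Im z), exp (Re z) * sin (Im z)).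

(* (i w)^g := w^g * e^{i g pi / 2}, with w^g := e^{g ln w} (principal branch) *)
Definition ipow (w : R) (g : Cplx) : Cplx :=
  Cmul (Cexp (Cscal (ln w) g)) (Cexp (Cmul (0, PI / 2) g)).

Definition Ehat (a b alpha : R) (beta : Cplx) (w : R) : Cplx :=
  Cadd (Cscal a (ipow w (alpha, 0)))
       (Cscal b (Cadd (ipow w beta) (ipow w (Cconj beta)))).

Definition cot (x : R) : R := cos x / sin x.

(* Main.v *)
Require Import Defs.
From Stdlib Require Import Reals Lra Psatz.
Open Scope R_scope.
From Stdlib Require Import Lra Psatz.

Lemma ipow_eq w g1 g2 : ipow w (g1,g2) =
  (exp (ln w * g1) * exp (- (PI/2*g2)) * cos (ln w * g2 + PI/2*g1),
   exp (ln w * g1) * exp (- (PI/2*g2)) * sin (ln w * g2 + PI/2*g1)).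
Proof.
  unfold ipow, Cmul, Cexp, Cscal, Re, Im; simpl.
  replace (0 * g1 - PI / 2 * g2) with (- (PI/2*g2)) by ring.
  replace (0 * g2 + PI / 2 * g1) with (PI/2*g1) by ring.
  rewrite cos_plus, sin_plus. f_equal; ring.
Qed.

Lemma Ehat_Re a b al A B w : Re (Ehat a b al (A,B) w) =
  a * (exp (ln w * al) * cos (PI/2*al)) +
  b * (exp (ln w * A) * exp (- (PI/2*B)) * cos (ln w * B + PI/2*A) +
       exp (ln w * A) * exp (PI/2*B) * cos (- (ln w * B) + PI/2*A)).
Proof.
  unfold Ehat; change (Cconj (A,B)) with (A,-B); rewrite !ipow_eq; unfold Cadd, Cscal, Re, Im; simpl.
  replace (ln w * 0 + PI/2*al) with (PI/2*al) by ring.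
  replace (- (PI/2*0)) with 0 by ring. rewrite exp_0.
  replace (ln w * - B) with (- (ln w * B)) by ring.
  replace (- (PI/2 * - B)) with (PI/2*B) by ring. ring.
Qed.

Lemma Ehat_Im a b al A B w : Im (Ehat a b al (A,B) w) =
  a * (exp (ln w * al) * sin (PI/2*al)) +
  b * (exp (ln w * A) * exp (- (PI/2*B)) * sin (ln w * B + PI/2*A) +
       exp (ln w * A) * exp (PI/2*B) * sin (- (ln w * B) + PI/2*A)).
Proof.
  unfold Ehat; change (Cconj (A,B)) with (A,-B); rewrite !ipow_eq; unfold Cadd, Cscal, Re, Im; simpl.
  replace (ln w * 0 + PI/2*al) with (PI/2*al) by ring.
  replace (- (PI/2*0)) with 0 by ring. rewrite exp_0.
  replace (ln w * - B) with (- (ln w * B)) by ring.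
  replace (- (PI/2 * - B)) with (PI/2*B) by ring. ring.
Qed.

Lemma trig_iff C X Y : 0 < X ->
  (forall t, 0 <= C + X * cos t + Y * sin t) <-> (0 <= C /\ X^2 + Y^2 <= C^2).
Proof.
  intros hX; split.
  - intros H. set (u := Y / X). set (r := sqrt (1 + u²)).
    assert (hr2 : r * r = 1 + u²) by (apply sqrt_sqrt; unfold Rsqr; nra).
    assert (hr : 0 < r) by (apply sqrt_lt_R0; unfold Rsqr; nra).
    specialize (H (atan u + PI)). rewrite neg_cos, neg_sin, cos_atan, sin_atan in H.
    fold r in H.
    assert (hY : Y = u * X) by (unfold u; field; lra).
    assert (E : X * - (1 / r) + Y * - (u / r) = - (X * r)).
    { rewrite hY. replace (- (X * r)) with (- X * (r*r) / r) by (field; lra).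
      rewrite hr2. unfold Rsqr. field. lra. }
    assert (0 <= C - X * r) by lra.
    assert (0 <= X * r) by nra.
    assert (hC: (X*r)*(X*r) <= C*C) by nra.
    split; [nra|]. rewrite hY. unfold Rsqr in hr2.
    replace ((X*r)*(X*r)) with (X*X*(r*r)) in hC by ring. rewrite hr2 in hC. nra.
  - intros [h0 h1] t. pose proof (sin2_cos2 t) as hsc. unfold Rsqr in hsc.
    assert (L : (X * cos t + Y * sin t)^2 <= C^2).
    { assert (E: (X^2+Y^2)*((sin t)*(sin t)+(cos t)*(cos t)) - (X * cos t + Y * sin t)^2 = (X * sin t - Y * cos t)^2) by ring.
      rewrite hsc in E. pose proof (pow2_ge_0 (X * sin t - Y * cos t)). lra. }
    set (Z := X * cos t + Y * sin t) in *.
    replace (C + X * cos t + Y * sin t) with (C + Z) by (unfold Z; ring).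
    destruct (Rle_dec 0 (C+Z)); auto. nra.
Qed.

Lemma exists_t B d M : 0 < B -> d <> 0 -> exists t, cos (t * B) = -1 /\ M < t * d.
Proof.
  intros hB hd. pose proof PI_RGT_0 as hPI.
  assert (had : 0 < Rabs d) by (apply Rabs_pos_lt; auto).
  destruct (INR_unbounded (Rabs M * B / (2 * PI * Rabs d))) as [n hn].
  set (t0 := (PI + 2 * INR n * PI) / B).
  assert (ht0B : t0 * B = PI + 2 * INR n * PI) by (unfold t0; field; lra).
  assert (hc : cos (t0 * B) = -1) by (rewrite ht0B, cos_period; apply cos_PI).
  assert (hn' : Rabs M * B < INR n * (2 * PI * Rabs d)).
  { assert (hD : 0 < 2 * PI * Rabs d) by nra.
    assert (Rabs M * B / (2 * PI * Rabs d) * (2 * PI * Rabs d) = Rabs M * B) by (field; lra).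
    assert (Rabs M * B / (2 * PI * Rabs d) * (2 * PI * Rabs d) < INR n * (2 * PI * Rabs d))
      by (apply Rmult_lt_compat_r; auto). lra. }
  assert (hpos : 0 <= INR n) by apply pos_INR.
  assert (key : Rabs M < t0 * Rabs d).
  { apply (Rmult_lt_reg_r B); auto.
    replace (t0 * Rabs d * B) with ((t0 * B) * Rabs d) by ring. rewrite ht0B. nra. }
  pose proof (Rle_abs M).
  destruct (Rlt_dec 0 d) as [dp|dn].
  - exists t0. rewrite (Rabs_right d) in key by lra. split; [exact hc|]. lra.
  - exists (- t0). rewrite (Rabs_left d) in key by lra. split.
    + replace (- t0 * B) with (- (t0 * B)) by ring. rewrite cos_neg. auto.
    + lra.
Qed.

Lemma part1 a b alpha A B : 0 < a -> 0 < b -> 0 < alpha -> alpha < 1 -> 0 < A -> A < 1 -> 0 < B ->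
  (forall w : R, 0 < w -> 0 <= Re (Ehat a b alpha (A,B) w) /\ 0 <= Im (Ehat a b alpha (A,B) w)) ->
  A = alpha.
Proof.
  intros ha hb hal0 hal1 hA0 hA1 hB H.
  pose proof PI_RGT_0 as hPI.
  destruct (Req_dec A alpha) as [e|ne]; auto. exfalso.
  set (p := exp (- (PI/2*B))). set (q := exp (PI/2*B)).
  assert (hp : 0 < p) by apply exp_pos. assert (hq : 0 < q) by apply exp_pos.
  set (cA := cos (PI/2*A)). set (ca := cos (PI/2*alpha)).
  assert (hcA : 0 < cA) by (apply cos_gt_0; nra).
  assert (hca : 0 < ca) by (apply cos_gt_0; nra).
  set (K := a * ca / (b * (p+q) * cA)).
  assert (hK : 0 < K) by (unfold K; apply Rdiv_lt_0_compat; [nra| apply Rmult_lt_0_compat; nra]).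
  destruct (exists_t B (A - alpha) (ln K) hB) as [t [hct ht]]; [lra|].
  specialize (H (exp t) (exp_pos t)). destruct H as [H _].
  rewrite Ehat_Re, ln_exp in H. fold p q cA ca in H.
  assert (hst : sin (t * B) = 0).
  { pose proof (sin2_cos2 (t*B)) as h. rewrite hct in h. unfold Rsqr in h. nra. }
  rewrite !cos_plus, cos_neg, sin_neg, hct, hst in H. fold cA in H.
  assert (hexp : K < exp (t * (A - alpha))).
  { rewrite <- (exp_ln K) by auto. apply exp_increasing. lra. }
  assert (hsplit : exp (t * A) = exp (t * alpha) * exp (t * (A - alpha))).
  { rewrite <- exp_plus. f_equal. ring. }
  rewrite hsplit in H.
  assert (hKe : K * (b * (p+q) * cA) = a * ca) by (unfold K; field; nra).
  assert (he : 0 < exp (t*alpha)) by apply exp_pos.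
  set (E := exp (t * (A - alpha))) in *. set (ea := exp (t*alpha)) in *.
  assert (0 < b * (p+q) * cA) by (apply Rmult_lt_0_compat; nra).
  assert (K * (b * (p+q) * cA) < E * (b * (p+q) * cA)) by (apply Rmult_lt_compat_r; auto).
  assert (ea * (a * ca) < ea * (E * (b * (p+q) * cA))) by (apply Rmult_lt_compat_l; lra).
  nra.
Qed.

Lemma sq_crit a b h k : 0 < a -> 0 < b -> 0 < h ->
  (a >= 2*b*h*sqrt(1+k^2) <-> 4*b^2*h^2*(1+k^2) <= a^2).
Proof.
  intros ha hb hh. set (r := sqrt (1+k^2)).
  assert (hr2 : r * r = 1 + k^2) by (apply sqrt_sqrt; nra).
  assert (hr : 0 <= r) by apply sqrt_pos.
  replace (4*b^2*h^2*(1+k^2)) with ((2*b*h*r)*(2*b*h*r)) by (rewrite <- hr2; ring).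
  assert (0 <= 2*b*h*r) by (apply Rmult_le_pos; nra).
  split; intro HH; nra.
Qed.

Lemma pos_of_mul e x : 0 < e -> 0 <= e * x -> 0 <= x.
Proof. intros. destruct (Rle_dec 0 x); auto. nra. Qed.

Lemma part2 a b alpha B : 0 < a -> 0 < b -> 0 < alpha -> alpha < 1 -> 0 < B ->
  ((forall w : R, 0 < w -> 0 <= Re (Ehat a b alpha (alpha,B) w) /\ 0 <= Im (Ehat a b alpha (alpha,B) w))
  <->
   ((alpha <= 1/2 ->
         a >= 2 * b * cosh (B * PI / 2)
                * sqrt (1 + (cot (alpha * PI / 2) * tanh (B * PI / 2)) ^ 2)) /\
      (1/2 <= alpha ->
         a >= 2 * b * cosh (B * PI / 2)
                * sqrt (1 + (tan (alpha * PI / 2) * tanh (B * PI / 2)) ^ 2)))).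
Proof.
  intros ha hb hal0 hal1 hB. pose proof PI_RGT_0 as hPI.
  replace (alpha * PI / 2) with (PI/2*alpha) by field.
  replace (B * PI / 2) with (PI/2*B) by field.
  set (phi := PI/2*alpha). set (Ph := PI/2*B).
  set (p := exp (- Ph)). set (q := exp Ph).
  assert (hp : 0 < p) by apply exp_pos. assert (hq : 0 < q) by apply exp_pos.
  assert (hpq : p < q) by (apply exp_increasing; unfold Ph; nra).
  set (c := cos phi). set (s := sin phi).
  assert (hc : 0 < c) by (apply cos_gt_0; unfold phi; nra).
  assert (hs : 0 < s) by (apply sin_gt_0; unfold phi; nra).
  assert (hcs : s * s + c * c = 1) by (pose proof (sin2_cos2 phi) as h; unfold Rsqr in h; exact h).
  assert (hcosh : cosh Ph = (q + p)/2) by (unfold cosh; fold q p; ring).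
  assert (htanh : tanh Ph = (q - p)/(q + p)) by (unfold tanh, sinh, cosh; fold q p; field; lra).
  assert (htan : tan phi = s / c) by reflexivity.
  assert (hcot : cot phi = c / s) by reflexivity.
  rewrite hcosh, htanh, htan, hcot.
  set (DR := b^2*(p+q)^2 + b^2*(q-p)^2*(s/c)^2 <= a^2).
  set (DI := b^2*(p+q)^2 + b^2*(q-p)^2*(c/s)^2 <= a^2).
  assert (hT : a >= 2 * b * ((q + p) / 2) * sqrt (1 + (s / c * ((q - p) / (q + p))) ^ 2) <-> DR).
  { rewrite sq_crit by lra. unfold DR.
    replace (4 * b ^ 2 * ((q + p) / 2) ^ 2 * (1 + (s / c * ((q - p) / (q + p))) ^ 2))
      with (b^2*(p+q)^2 + b^2*(q-p)^2*(s/c)^2) by (field; lra). tauto. }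
  assert (hC : a >= 2 * b * ((q + p) / 2) * sqrt (1 + (c / s * ((q - p) / (q + p))) ^ 2) <-> DI).
  { rewrite sq_crit by lra. unfold DI.
    replace (4 * b ^ 2 * ((q + p) / 2) ^ 2 * (1 + (c / s * ((q - p) / (q + p))) ^ 2))
      with (b^2*(p+q)^2 + b^2*(q-p)^2*(c/s)^2) by (field; lra). tauto. }
  rewrite hT, hC.
  assert (hRe : forall w, Re (Ehat a b alpha (alpha,B) w) =
     exp (ln w * alpha) * (a * c + (b*(p+q)*c) * cos (ln w * B) + (b*(q-p)*s) * sin (ln w * B))).
  { intro w. rewrite Ehat_Re. fold phi Ph p q.
    rewrite !cos_plus, cos_neg, sin_neg. fold c s. ring. }
  assert (hIm : forall w, Im (Ehat a b alpha (alpha,B) w) =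
     exp (ln w * alpha) * (a * s + (b*(p+q)*s) * cos (ln w * B) + (b*(p-q)*c) * sin (ln w * B))).
  { intro w. rewrite Ehat_Im. fold phi Ph p q.
    rewrite !sin_plus, cos_neg, sin_neg. fold c s. ring. }
  assert (hN : (forall w : R, 0 < w -> 0 <= Re (Ehat a b alpha (alpha,B) w) /\ 0 <= Im (Ehat a b alpha (alpha,B) w))
     <-> (forall t, 0 <= a * c + (b*(p+q)*c) * cos t + (b*(q-p)*s) * sin t) /\
         (forall t, 0 <= a * s + (b*(p+q)*s) * cos t + (b*(p-q)*c) * sin t)).
  { split.
    - intro H. split; intro t; destruct (H (exp (t / B)) (exp_pos _)) as [H1 H2];
      [rewrite hRe in H1 | rewrite hIm in H2]; rewrite ln_exp in *;
      replace (t / B * B) with t in * by (field; lra).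
      + exact (pos_of_mul _ _ (exp_pos _) H1).
      + exact (pos_of_mul _ _ (exp_pos _) H2).
    - intros [H1 H2] w hw. rewrite hRe, hIm. split; apply Rmult_le_pos;
      try (left; apply exp_pos); auto. }
  rewrite hN.
  rewrite (trig_iff (a*c)) by (apply Rmult_lt_0_compat; [apply Rmult_lt_0_compat|]; lra).
  rewrite (trig_iff (a*s)) by (apply Rmult_lt_0_compat; [apply Rmult_lt_0_compat|]; lra).
  assert (eR : (0 <= a * c /\ (b * (p + q) * c) ^ 2 + (b * (q - p) * s) ^ 2 <= (a * c) ^ 2) <-> DR).
  { unfold DR.
    assert (E : (b * (p + q) * c) ^ 2 + (b * (q - p) * s) ^ 2 = c^2 * (b ^ 2 * (p + q) ^ 2 + b ^ 2 * (q - p) ^ 2 * (s / c) ^ 2)) by (field; lra).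
    rewrite E. split.
    - intros [_ h]. replace ((a*c)^2) with (c^2 * a^2) in h by ring.
      apply (Rmult_le_reg_l (c^2)); [nra|exact h].
    - intro h. split; [nra|]. replace ((a*c)^2) with (c^2 * a^2) by ring.
      apply Rmult_le_compat_l; [nra|exact h]. }
  assert (eI : (0 <= a * s /\ (b * (p + q) * s) ^ 2 + (b * (p - q) * c) ^ 2 <= (a * s) ^ 2) <-> DI).
  { unfold DI.
    assert (E : (b * (p + q) * s) ^ 2 + (b * (p - q) * c) ^ 2 = s^2 * (b ^ 2 * (p + q) ^ 2 + b ^ 2 * (q - p) ^ 2 * (c / s) ^ 2)) by (field; lra).
    rewrite E. split.
    - intros [_ h]. replace ((a*s)^2) with (s^2 * a^2) in h by ring.
      apply (Rmult_le_reg_l (s^2)); [nra|exact h].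
    - intro h. split; [nra|]. replace ((a*s)^2) with (s^2 * a^2) by ring.
      apply Rmult_le_compat_l; [nra|exact h]. }
  rewrite eR, eI.
  assert (huv : (s/c) * (c/s) = 1) by (field; lra).
  assert (hu : 0 < s/c) by (apply Rdiv_lt_0_compat; lra).
  assert (hv : 0 < c/s) by (apply Rdiv_lt_0_compat; lra).
  assert (hu1 : (s/c) * c = s) by (field; lra).
  assert (hv1 : (c/s) * s = c) by (field; lra).
  assert (hqp : 0 <= b^2*(q-p)^2) by (apply Rmult_le_pos; apply pow2_ge_0).
  destruct (Rle_dec alpha (1/2)) as [hle|hgt].
  - assert (h2 : 0 <= c * c - s * s).
    { assert (E : cos (2*phi) = c*c - s*s) by apply cos_2a. rewrite <- E.
      apply cos_ge_0; unfold phi; nra. }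
    assert (hsc : s <= c) by nra.
    assert (hle2 : (s/c)^2 <= (c/s)^2) by nra.
    assert (DI -> DR).
    { unfold DI, DR. intro h. assert (b^2*(q-p)^2*(s/c)^2 <= b^2*(q-p)^2*(c/s)^2)
        by (apply Rmult_le_compat_l; auto). lra. }
    tauto.
  - assert (h2 : 0 <= - (c * c - s * s)).
    { assert (E : cos (2*phi) = c*c - s*s) by apply cos_2a. rewrite <- E, <- Rtrigo_facts.cos_pi_minus.
      apply cos_ge_0; unfold phi; nra. }
    assert (hsc : c <= s) by nra.
    assert (hle2 : (c/s)^2 <= (s/c)^2) by nra.
    assert (DR -> DI).
    { unfold DI, DR. intro h. assert (b^2*(q-p)^2*(c/s)^2 <= b^2*(q-p)^2*(s/c)^2)
        by (apply Rmult_le_compat_l; auto). lra. }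
    assert (~ alpha <= 1/2) by auto. split.
    + intros [H1 H2]. split; intros _; assumption.
    + intros [H1 H2]. split; [apply H2; lra | apply H; apply H2; lra].
Qed.

Lemma part3 a b x k : 0 < b -> a >= 2 * b * cosh x * sqrt (1 + k^2) -> a >= 2 * b.
Proof.
  intros hb H.
  assert (hc : 1 <= cosh x).
  { unfold cosh. assert (E : exp x * exp (- x) = 1) by (rewrite <- exp_plus, Rplus_opp_r; apply exp_0).
    pose proof (exp_pos x). pose proof (exp_pos (-x)). pose proof (pow2_ge_0 (exp x - exp (-x))). nra. }
  assert (hs : 1 <= sqrt (1 + k^2)).
  { rewrite <- sqrt_1 at 1. apply sqrt_le_1_alt. pose proof (pow2_ge_0 k). lra. }
  assert (2*b <= 2*b*cosh x) by nra. assert (2*b*cosh x <= 2*b*cosh x*sqrt (1+k^2)) by nra. lra.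
Qed.

Theorem mainTheorem4 (a b alpha A B : R)
  (ha : 0 < a) (hb : 0 < b) (hal0 : 0 < alpha) (hal1 : alpha < 1)
  (hA0 : 0 < A) (hA1 : A < 1) (hB : 0 < B) :
  let beta : Cplx := (A, B) in
  let nonneg := forall w : R, 0 < w ->
      0 <= Re (Ehat a b alpha beta w) /\ 0 <= Im (Ehat a b alpha beta w) in
  let crit :=
      (alpha <= 1/2 ->
         a >= 2 * b * cosh (B * PI / 2)
                * sqrt (1 + (cot (alpha * PI / 2) * tanh (B * PI / 2)) ^ 2)) /\
      (1/2 <= alpha ->
         a >= 2 * b * cosh (B * PI / 2)
                * sqrt (1 + (tan (alpha * PI / 2) * tanh (B * PI / 2)) ^ 2)) in
  (nonneg -> A = alpha) /\
  (A = alpha -> (nonneg <-> crit)) /\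
  (crit -> a >= 2 * b).
Proof.
  intros beta nonneg crit. unfold nonneg, crit, beta. split; [|split].
  - apply part1; auto.
  - intros e. subst A. apply part2; auto.
  - intros [H1 H2]. destruct (Rle_dec alpha (1/2)) as [h|h].
    + exact (part3 _ _ _ _ hb (H1 h)).
    + apply (part3 _ _ _ _ hb (H2 ltac:(lra))).
Qed.
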